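(* A (Hausdorff, real) topological vector space $E$ contains a linear subspace topologically isomorphic to $\mathbb{R}^{\mathbb{N}}$ if and only if $E$ contains a non-trivial $\mathbb{R}^{\mathbb{N}}$-convergent sequence.
   Context: $\mathbb{R}^{\mathbb{N}}$ carries the Tychonoff product topology. A sequence $\{a_n:n\in\mathbb{N}\}$ in $E$ is $\mathbb{R}^{\mathbb{N}}$-convergent if for every real sequence $\{r_n:n\in\mathbb{N}\}$ the series $\sum_{n}r_na_n$ converges in $E$ (i.e. its partial sums converge to some element of $E$). Such a sequence is non-trivial if $a_n\neq 0$ for infinitely many $n$. *)

(* Defs.v *)
From HB Require Import structures.
From mathcomp Require Import all_boot all_order all_algebra.
From mathcomp Require Import all_classical all_reals all_analysis.
Set Implicit Arguments. Unset Strict Implicit. Unset Printing Implicit Defensive.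
Import Order.TTheory GRing.Theory Num.Theory.
Import numFieldTopology.Exports numFieldNormedType.Exports.
Local Open Scope classical_set_scope.
Local Open Scope ring_scope.

Definition RN (R : realType) : topologicalType := {ptws nat -> R}.

Definition top_lin_embedding (R : realType) (E : topologicalLmodType R)
    (f : RN R -> E) : Prop :=
  [/\ (forall (a : R) (x y : RN R),
         f (fun n => a * x n + y n) = a *: f x + f y),
      injective f,
      continuous f &
      (forall U : set (RN R), open U ->
         exists V : set E, open V /\ f @` U = V `&` range f)].

Definition RN_convergent (R : realType) (E : topologicalLmodType R)
    (a : nat -> E) : Prop :=
  forall r : nat -> R, exists l : E,
    (fun n : nat => \sum_(k < n) r k *: a k) @ \oo --> l.

Definition nontrivial_seq (R : realType) (E : topologicalLmodType R)
    (a : nat -> E) : Prop :=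
  infinite_set [set n | a n != 0].

(* Main.v *)
From HB Require Import structures.
Require Import Defs.
From mathcomp Require Import all_boot all_order all_algebra.
From mathcomp Require Import all_classical all_reals all_analysis.
Set Implicit Arguments. Unset Strict Implicit. Unset Printing Implicit Defensive.
Import Order.TTheory GRing.Theory Num.Theory.
Import numFieldTopology.Exports numFieldNormedType.Exports.
Local Open Scope classical_set_scope.
Local Open Scope ring_scope.
Section TVS.
Context {R : realType} {E : topologicalLmodType R}.

Lemma addr_cont (a : E) : continuous (fun x : E => x + a).
Proof.
move=> x; apply: (@continuous_comp _ _ _ (fun x => (x, a)) (fun x : E * E => x.1 + x.2)).
  by apply: cvg_pair; [exact: cvg_id|exact: cvg_cst].
exact: add_continuous.
Qed.

Lemma scaler_cont (c : R) : continuous (fun x : E => c *: x).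
Proof.
move=> x; apply: (@continuous_comp E (R^o * E)%type E (fun x => (c, x)) (fun z => z.1 *: z.2)).
  by apply: (@cvg_pair _ _ _ _ (nbhs (c : R^o))); [exact: cvg_cst|exact: cvg_id].
exact: scale_continuous.
Qed.

Lemma nbhs0_add (U : set E) : nbhs 0 U ->
  exists2 V : set E, nbhs 0 V & forall x y, V x -> V y -> U (x + y).
Proof.
move=> U0.
have := @add_continuous E (0, 0) U; rewrite /= addr0 => /(_ U0).
move=> [[P Q] /= [hP hQ] sPQ].
exists (P `&` Q); first exact: filterI.
by move=> x y [Px _] [_ Qy]; apply: (sPQ (x, y)).
Qed.

Lemma nbhs0_scale (U : set E) : nbhs 0 U ->
  exists2 d : R, 0 < d & exists2 V : set E, nbhs 0 V &
    forall (t : R) x, `|t| < d -> V x -> U (t *: x).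
Proof.
move=> U0.
have := @scale_continuous R E ((0 : R^o), (0 : E)) U; rewrite /= scale0r => /(_ U0).
move=> [[P Q] /= [hP hQ] sPQ].
move: hP => /nbhs_ballP [d d0 hd].
exists d => //; exists Q => // t x td Qx.
apply: (sPQ (t, x)); split => //=; apply: hd.
by rewrite /ball /= sub0r normrN.
Qed.

Lemma nbhs_pre (f : E -> E) (a : E) (U : set E) :
  continuous f -> nbhs (f a) U -> nbhs a (f @^-1` U).
Proof. by move=> cf hU; exact: (cf a U hU). Qed.

Lemma nbhs0_scaled (c : R) (V : set E) : nbhs 0 V -> nbhs 0 [set x | V (c *: x)].
Proof. by move=> V0; apply: (@nbhs_pre (fun x => c *: x)); [exact: scaler_cont|rewrite scaler0]. Qed.

Definition bal (U : set E) := [set x : E | forall t : R, `|t| <= 1 -> U (t *: x)].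

Lemma bal_sub U : bal U `<=` U.
Proof. by move=> x /(_ 1); rewrite scale1r normr1; apply. Qed.

Lemma bal_bal U t x : `|t| <= 1 -> bal U x -> bal U (t *: x).
Proof.
move=> t1 bx s s1; rewrite scalerA; apply: bx.
by rewrite normrM -[1]mulr1 ler_pM.
Qed.

Lemma nbhs0_bal U : nbhs 0 U -> nbhs 0 (bal U).
Proof.
move=> /nbhs0_scale [d d0 [V V0 hV]].
have c0 : 0 < d / 2 by rewrite divr_gt0.
apply: filterS (nbhs0_scaled (d / 2)^-1 V0) => x Vx t t1.
have -> : t *: x = (t * (d / 2)) *: ((d / 2)^-1 *: x).
  by rewrite scalerA -mulrA divff ?mulr1 // gt_eqF.
apply: hV => //; rewrite normrM (gtr0_norm c0).
apply: (@le_lt_trans _ _ (d / 2)); first by rewrite -[leRHS]mul1r ler_pM // ltW.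
by rewrite ltr_pdivrMr // ltr_pMr // ltr1n.
Qed.

Lemma nbhs0_add3 (U : set E) : nbhs 0 U ->
  exists2 V : set E, nbhs 0 V & forall x y z, V x -> V y -> V z -> U (x + y + z).
Proof.
move=> /nbhs0_add [W W0 hW]; have [V V0 hV] := nbhs0_add W0.
exists (V `&` W); first exact: filterI.
by move=> x y z [Vx _] [Vy _] [_ Wz]; apply: hW => //; apply: hV.
Qed.
End TVS.
Section Seq.
Context {R : realType} {E : topologicalLmodType R}.
Implicit Types (a : nat -> E) (d : nat -> R).

Lemma sum_from d a N M : (forall k, (k < N)%N -> d k = 0) ->
  \sum_(k < M) d k *: a k = \sum_(N <= k < M) d k *: a k.
Proof.
move=> dN; case: (leqP M N) => MN.
  rewrite big_geq // big1 // => i _; rewrite dN ?scale0r //.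
  exact: leq_trans (ltn_ord i) MN.
rewrite -(big_mkord xpredT (fun k => d k *: a k)) (@big_cat_nat _ _ _ N 0 M _ _ (leq0n N) (ltnW MN)) /=.
rewrite [X in X + _]big_nat_cond big1 ?add0r // => i /andP[/andP[_ iN] _].
by rewrite dN ?scale0r.
Qed.

Lemma sum_diff (F : nat -> E) N M : (N <= M)%N ->
  \sum_(k < M) F k - \sum_(k < N) F k = \sum_(N <= k < M) F k.
Proof.
move=> NM; rewrite -!(big_mkord xpredT F) (@big_cat_nat _ _ _ N 0 M _ _ (leq0n N) NM) /=.
by rewrite addrAC subrr add0r.
Qed.

Lemma cvg_ev (u : nat -> E) (l : E) (U : set E) : u @ \oo --> l -> nbhs l U ->
  exists N, forall n, (N <= n)%N -> U (u n).
Proof. by move=> hu /hu [N _ hN]; exists N => n /hN. Qed.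

Lemma cvg_subseq (u : nat -> E) (phi : nat -> nat) (l : E) :
  (forall n, (n <= phi n)%N) -> u @ \oo --> l -> (u \o phi) @ \oo --> l.
Proof.
move=> hphi hu U /hu [N _ hN]; exists N => // n /= Nn.
by apply: hN; exact: leq_trans Nn (hphi n).
Qed.

Lemma cvgB_tvs {T} (F : set_system T) {FF : Filter F} (u v : T -> E) (l l' : E) :
  u @ F --> l -> v @ F --> l' -> (fun n => u n - v n) @ F --> l - l'.
Proof.
move=> hu hv.
apply: (@cvg_trans _ ((fun z : E * E => z.1 - z.2) @ ((fun n => (u n, v n)) @ F))).
  by [].
apply: cvg_trans (@sub_continuous E (l, l')).
by apply: cvg_app; apply: cvg_pair.
Qed.
End Seq.
Fixpoint blk (MM : nat -> nat) (k : nat) : nat :=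
  match k with 0 => 0 | k'.+1 => if k'.+1 == MM (blk MM k') then k'.+1 else blk MM k' end.

Lemma blk_in MM s i : blk MM s = s -> (s + i < MM s)%N -> blk MM (s + i) = s.
Proof.
move=> bs; elim: i => [|i IH] hi; first by rewrite addn0.
move: hi; rewrite addnS => hi /=; rewrite IH ?(ltnW hi) //.
by rewrite ifN // neq_ltn hi.
Qed.

Lemma blk_end MM s : blk MM s = s -> (s < MM s)%N -> blk MM (MM s) = MM s.
Proof.
move=> bs sM; have e : MM s = (s + (MM s - s.+1)).+1.
  by rewrite -addnS subnSK // subnKC // ltnW.
by rewrite [in LHS]e /= blk_in // -?e ?eqxx // -ltnS -e.
Qed.

Lemma blk_st MM j : (forall s, (s < MM s)%N) -> blk MM (iter j MM 0) = iter j MM 0.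
Proof. by move=> hM; elim: j => [|j IH] //=; rewrite blk_end. Qed.

Lemma iter_ge MM j : (forall s, (s < MM s)%N) -> (j <= iter j MM 0)%N.
Proof. by move=> hM; elim: j => [|j IH] //=; apply: leq_ltn_trans IH (hM _). Qed.

Section Hump.
Context {R : realType} {E : topologicalLmodType R}.

Lemma tail_small (a : nat -> E) : RN_convergent a -> forall U : set E, nbhs 0 U ->
  exists N, forall (d : nat -> R) M, (forall k, (k < N)%N -> d k = 0) ->
    U (\sum_(k < M) d k *: a k).
Proof.
move=> ha U U0; apply: contrapT => nN.
have hN : forall N, exists dM : (nat -> R) * nat,
    (forall k, (k < N)%N -> dM.1 k = 0) /\ ~ U (\sum_(k < dM.2) dM.1 k *: a k).
  move=> N; apply: contrapT => h; apply: nN; exists N => d M dz.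
  by apply: contrapT => nU; apply: h; exists (d, M).
have [f hf] := choice hN.
pose D N := (f N).1; pose MM N := (f N).2.
have MMgt : forall s, (s < MM s)%N.
  move=> s; rewrite ltnNge; apply/negP => Ms.
  have [h1 h2] := hf s; apply: h2; rewrite big1; first exact: nbhs_singleton.
  by move=> i _; rewrite h1 ?scale0r //; apply: leq_trans (ltn_ord i) Ms.
pose r k := D (blk MM k) k.
have [l hl] := ha r.
pose S n := \sum_(k < n) r k *: a k.
have blkS : forall s, blk MM s = s -> S (MM s) - S s = \sum_(k < MM s) D s k *: a k.
  move=> s bs; rewrite /S (sum_diff (fun k => r k *: a k)) ?(ltnW (MMgt s)) //.
  rewrite (sum_from _ _ (N := s)); last by move=> k ks; have [h1 _] := hf s; exact: h1.
  apply: eq_big_nat => k /andP[sk kM]; rewrite /r.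
  by rewrite -(subnKC sk) blk_in // subnKC.
pose st j := iter j MM 0.
have hw : (fun j => S (st j.+1) - S (st j)) @ \oo --> l - l.
  apply: cvgB_tvs.
    by apply: (@cvg_subseq _ _ S (fun j => st j.+1)) => // n; apply: leq_trans (iter_ge _ _) => //.
  by apply: (@cvg_subseq _ _ S st) => // n; exact: iter_ge.
rewrite subrr in hw.
have [N hN'] := cvg_ev hw U0.
have := hN' N (leqnn N); rewrite /= /st /= blkS; last exact: blk_st.
by have [_ h2] := hf (iter N MM 0).
Qed.
End Hump.
Section Fin.
Context {R : realType} {E : topologicalLmodType R}.
Implicit Types (a : nat -> E) (d : nat -> R).

Lemma scalel_cont (x : E) : continuous (fun t : R^o => t *: x).
Proof.
move=> t; apply: (@continuous_comp R^o (R^o * E)%type E (fun t => (t, x)) (fun z => z.1 *: z.2)).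
  by apply: (@cvg_pair _ _ _ _ (nbhs (t : R^o))); [exact: cvg_id|exact: cvg_cst].
exact: scale_continuous.
Qed.

Lemma sum_split_at d a (N M : nat) :
  \sum_(k < M) d k *: a k = \sum_(k < M) (if (k < N)%N then d k else 0) *: a k
                          + \sum_(k < M) (if (k < N)%N then 0 else d k) *: a k.
Proof.
rewrite -(@big_split _ _ _ _ _ xpredT (fun k : 'I_M => _)) /=; apply: eq_bigr => k _.
by case: ifP => _; rewrite scale0r ?addr0 ?add0r.
Qed.

Lemma sum_split1 d a (p M : nat) :
  \sum_(k < M) d k *: a k = \sum_(k < M) (if k == p :> nat then 0 else d k) *: a k
                          + (if (p < M)%N then d p else 0) *: a p.
Proof.
have -> : \sum_(k < M) d k *: a k = \sum_(k < M) (if k == p :> nat then 0 else d k) *: a k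
     + \sum_(k < M) (if k == p :> nat then d p *: a p else 0).
  rewrite -big_split /=; apply: eq_bigr => k _.
  by case: eqP => [->|_]; rewrite ?scale0r ?add0r ?addr0.
congr (_ + _); rewrite -big_mkcond /=.
case: (ltnP p M) => pM.
  by rewrite (big_pred1 (Ordinal pM)).
rewrite big_pred0 ?scale0r // => k; apply/negP => /eqP kp.
by move: (ltn_ord k); rewrite kp ltnNge pM.
Qed.

Lemma head_small a (m : nat) (U : set E) : nbhs 0 U ->
  exists2 del : R, 0 < del & forall d M, (forall k, (k < m)%N -> `|d k| < del) ->
    (forall k, (m <= k)%N -> d k = 0) -> U (\sum_(k < M) d k *: a k).
Proof.
elim: m U => [|m IH] U U0.
  exists 1 => // d M _ d0; rewrite big1; first exact: nbhs_singleton.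
  by move=> k _; rewrite d0 ?scale0r.
have [V V0 hV] := nbhs0_add U0.
have [d1 d10 h1] := IH V V0.
have : nbhs (0 : R^o) [set t : R | V (t *: a m)].
  by move: (@scalel_cont (a m) 0 V); rewrite scale0r; apply.
move=> /nbhs_ballP [d2 d20 h2].
exists (Num.min d1 d2); first by rewrite lt_min d10.
move=> d M hd hz; rewrite (sum_split1 _ _ m); apply: hV.
  apply: (h1 (fun k => if k == m then 0 else d k)).
    move=> k km; case: eqP => [_|_]; first by rewrite normr0.
    by apply: lt_le_trans (hd k (ltnW km)) _; rewrite ge_min lexx.
  move=> k mk; case: eqP => // /eqP km; apply: hz.
  by rewrite ltn_neqAle eq_sym km.
apply: h2; rewrite /ball /= sub0r normrN.
case: ifP => _; last by rewrite normr0.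
by apply: lt_le_trans (hd m (ltnSn m)) _; rewrite ge_min lexx orbT.
Qed.
End Fin.
Section Construct.
Context {R : realType} {E : topologicalLmodType R}.
Variable a : nat -> E.
Hypothesis ha : RN_convergent a.
Hypothesis hE : hausdorff_space E.
Hypothesis hnt : nontrivial_seq a.

Definition nP (J : nat) (f : nat -> nat) (k : nat) := forall j, (j < J)%N -> f j != k.

Definition Inv J f m (V : set E) : Prop :=
  [/\ nbhs 0 V, (forall j, (j < J)%N -> (f j < m)%N) &
   forall (d : nat -> R) M, (m <= M)%N -> (forall k, (k < m)%N -> nP J f k -> d k = 0) ->
     V (\sum_(k < M) d k *: a k) -> forall j, (j < J)%N -> `|d (f j)| < 1].

Definition Sp J f p : set E := [set y | exists (d : nat -> R) M,
  (forall k, (k <= p)%N -> nP J f k -> d k = 0) /\ y = \sum_(k < M) d k *: a k].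

Lemma sum_pad (d : nat -> R) M M' : (M <= M')%N ->
  \sum_(k < M) d k *: a k = \sum_(k < M') (if (k < M)%N then d k else 0) *: a k.
Proof.
move=> MM; rewrite (big_ord_widen M' (fun k => d k *: a k) MM) big_mkcond /=.
by apply: eq_bigr => k _; case: ifP => _; rewrite ?scale0r.
Qed.

Lemma Sp_add J f p x y : Sp J f p x -> Sp J f p y -> Sp J f p (x + y).
Proof.
move=> [d1 [M1 [h1 ->]]] [d2 [M2 [h2 ->]]].
exists (fun k => (if (k < M1)%N then d1 k else 0) + (if (k < M2)%N then d2 k else 0)).
exists (maxn M1 M2); split.
  move=> k kp hk; rewrite h1 // h2 //; case: ifP; case: ifP => _ _; rewrite addr0 //.
rewrite (sum_pad d1 (leq_maxl M1 M2)) (sum_pad d2 (leq_maxr M1 M2)) -big_split /=.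
by apply: eq_bigr => k _; rewrite scalerDl.
Qed.

Lemma Sp_scale J f p (c : R) x : Sp J f p x -> Sp J f p (c *: x).
Proof.
move=> [d [M [h ->]]]; exists (fun k => c * d k), M; split.
  by move=> k kp hk; rewrite h // mulr0.
by rewrite scaler_sumr; apply: eq_bigr => k _; rewrite scalerA.
Qed.

Lemma affine_cont (c : R) (b : E) : continuous (fun x : E => c *: x + b).
Proof. by move=> x; exact: (continuous_comp (@scaler_cont R E c x) (@addr_cont R E b (c *: x))). Qed.

Lemma cl_map (g : E -> E) (A B : set E) x : continuous g ->
  (forall y, A y -> B (g y)) -> closure A x -> closure B (g x).
Proof.
move=> cg AB clx C Cg; have [y [Ay Cgy]] := clx _ (cg x C Cg).
by exists (g y); split => //; apply: AB.
Qed.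

Lemma closure_closure (A : set E) : closure (closure A) = closure A.
Proof. by rewrite -(closure_id (closure A)).1 //; exact: closed_closure. Qed.

Lemma Sp_chain J f m p : (forall q, (m <= q)%N -> closure (Sp J f q) (a q)) ->
  (forall j, (j < J)%N -> (f j < m)%N) -> (m <= p)%N ->
  closure (Sp J f p) `<=` closure (Sp J f p.+1).
Proof.
move=> hcl hf mp.
suff : Sp J f p `<=` closure (Sp J f p.+1).
  by move=> /closureS; rewrite closure_closure.
move=> _ [d [M [hd ->]]]; rewrite (sum_split1 d a p.+1 M).
set c := (if (p.+1 < M)%N then d p.+1 else 0).
set y' := \sum_(k < M) _.
have y'S : Sp J f p.+1 y'.
  exists (fun k => if k == p.+1 then 0 else d k), M; split => //.
  move=> k kp hk; case: eqP => // /eqP kp1; apply: hd => //.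
  by rewrite -ltnS ltn_neqAle kp1 kp.
have -> : y' + c *: a p.+1 = (fun x => c *: x + y') (a p.+1) by rewrite /= addrC.
apply: (@cl_map (fun x => c *: x + y') (Sp J f p.+1)).
- exact: affine_cont.
- by move=> y Sy; apply: Sp_add => //; apply: Sp_scale.
- by apply: hcl; apply: leq_trans mp _.
Qed.

Lemma notnP J f k : ~ nP J f k -> exists2 j, (j < J)%N & f j = k.
Proof.
move=> np; apply: contrapT => h; apply: np => j jJ; apply/negP => /eqP e.
by apply: h; exists j.
Qed.

Lemma Sp_zero J f m V p : Inv J f m V -> (m <= p)%N ->
  (forall s, (p <= s)%N -> closure (Sp J f s) (a p)) -> a p = 0.
Proof.
move=> [V0 hf hV] mp hcl.
apply: esym; apply: hE => U B U0 Bp.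
have [U1 U10 hU1] := nbhs0_add U0.
have [del del0 hdel] := head_small a m U10.
have [N0 hN0] := tail_small ha U10.
set s := maxn N0 p.
set lam := del^-1.
have Bn : nbhs (a p) (B `&` [set y | V (lam *: (y - a p))]).
  apply: filterI => //.
  have := @affine_cont lam (- (lam *: a p)) (a p) V.
  rewrite subrr => /(_ V0) h; apply: (@filterS _ (nbhs (a p)) _ _ _ _ h) => y /=.
  by rewrite scalerBr.
have [y [Sy [By Vy]]] := hcl s (leq_maxr _ _) _ Bn.
exists y; split => //.
move: Sy Vy => [d [M [hd ->]]] Vy.
set M' := maxn M (maxn m p.+1).
have MM' : (M <= M')%N by exact: leq_maxl.
have mM' : (m <= M')%N by apply: leq_trans (leq_maxl m p.+1) (leq_maxr M _).
have pM' : (p < M')%N by apply: leq_trans (leq_maxr m p.+1) (leq_maxr M _).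
rewrite (sum_pad d MM') in Vy *.
set d' := fun k => if (k < M)%N then d k else 0.
have hd' : forall k, (k <= s)%N -> nP J f k -> d' k = 0.
  by move=> k ks hk; rewrite /d'; case: ifP => // _; exact: hd.
pose e := fun k => lam * d' k - (if k == p then lam else 0).
have esum : \sum_(k < M') e k *: a k = lam *: (\sum_(k < M') d' k *: a k - a p).
  rewrite (eq_bigr (fun k : 'I_M' => (lam * d' k) *: a k - (if k == p :> nat then lam else 0) *: a k)); last first.
    by move=> k _; rewrite scalerBl.
  rewrite sumrB (sum_split1 (fun k => if k == p then lam else 0) a p M') pM' eqxx.
  rewrite [X in _ - (X + _)]big1 ?add0r; last by move=> k _; case: ifP => kp; rewrite ?kp scale0r.
  by rewrite scalerBr scaler_sumr; congr (_ - _); apply: eq_bigr => k _; rewrite scalerA.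
have hlt := hV e M' mM'.
have hsmall : forall j, (j < J)%N -> `|d' (f j)| < del.
  move=> j jJ; have fjp : f j != p.
    by rewrite neq_ltn (leq_trans (hf j jJ) mp).
  have := hlt _ _ j jJ.
  rewrite /e (negbTE fjp) subr0 normrM gtr0_norm ?invr_gt0 //.
  rewrite mulrC ltr_pdivrMr // mul1r; apply.
  - move=> k km hk.
    have kp : (k == p) = false by apply/negbTE; rewrite neq_ltn (leq_trans km mp).
    rewrite /e kp hd' ?mulr0 ?subr0 //.
    by apply: leq_trans (ltnW (leq_trans km mp)) (leq_maxr _ _).
  - by rewrite esum.
rewrite (sum_split_at d' a m M'); apply: hU1.
  apply: (hdel (fun k => if (k < m)%N then d' k else 0)).
    move=> k km; rewrite km.
    case: (pselect (nP J f k)) => [np|/notnP [j jJ <-]]; last exact: hsmall.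
    rewrite hd' ?normr0 //.
    by apply: leq_trans (ltnW (leq_trans km mp)) (leq_maxr _ _).
  by move=> k mk; rewrite ltnNge mk.
apply: (hN0 (fun k => if (k < m)%N then 0 else d' k)) => k kN0; case: ifP => // /negbT; rewrite -leqNgt => mk.
apply: hd'; first by apply: ltnW; apply: leq_trans kN0 (leq_maxl _ _).
by move=> j jJ; rewrite neq_ltn (leq_trans (hf j jJ) mk).
Qed.

Lemma Sp_iter J f m p i : (forall q, (m <= q)%N -> closure (Sp J f q) (a q)) ->
  (forall j, (j < J)%N -> (f j < m)%N) -> (m <= p)%N ->
  closure (Sp J f p) `<=` closure (Sp J f (p + i)).
Proof.
move=> hcl hf mp; elim: i => [|i IH]; first by rewrite addn0.
rewrite addnS; apply: subset_trans IH _; apply: (Sp_chain hcl hf).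
by apply: leq_trans mp _; rewrite leq_addr.
Qed.

Lemma Sp_ex J f m V : Inv J f m V -> exists p, (m <= p)%N /\ ~ closure (Sp J f p) (a p).
Proof.
move=> hI; apply: contrapT => h.
have hcl : forall q, (m <= q)%N -> closure (Sp J f q) (a q).
  by move=> q mq; apply: contrapT => nq; apply: h; exists q.
have [p mp ap] : exists2 p, (m <= p)%N & a p != 0.
  apply: contrapT => h2; apply: hnt; apply: (sub_finite_set _ (finite_II m)) => n /= an.
  rewrite ltnNge; apply/negP => mn; apply: h2; exists n => //.
move/eqP: ap; apply; apply: (Sp_zero hI mp) => s ps.
case: hI => _ hf _.
have := @Sp_iter J f m p (s - p) hcl hf mp; rewrite subnKC //; apply; exact: hcl.
Qed.

Definition upd (f : nat -> nat) J p := fun j => if j == J then p else f j.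

Lemma Inv_step J f m V : Inv J f m V ->
  exists p (V' : set E), (m <= p)%N /\ Inv J.+1 (upd f J p) p.+1 V'.
Proof.
move=> hI; have [p [mp ncl]] := Sp_ex hI.
case: hI => [V0 hf hV].
have [B Bn BS] : exists2 B, nbhs (a p) B & forall y, B y -> ~ Sp J f p y.
  apply: contrapT => h; apply: ncl => B Bn; apply: contrapT => h2; apply: h.
  by exists B => // y By Sy; apply: h2; exists y.
pose W := [set w | B (w + a p)].
have W0 : nbhs 0 W.
  by have := @addr_cont R E (a p) 0 B; rewrite add0r => /(_ Bn).
exists p, (bal (V `&` W)); split => //; split.
- exact: nbhs0_bal (filterI V0 W0).
- move=> j; rewrite ltnS leq_eqVlt /upd => /orP [/eqP ->|jJ]; first by rewrite eqxx.
  by rewrite (ltn_eqF jJ) ltnS; apply: leq_trans (ltnW (hf j jJ)) mp.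
- move=> d M pM hz hb j jJ1.
  have hnP : forall k, (k < m)%N -> nP J f k -> d k = 0.
    move=> k km hk; have kp : (k < p)%N by apply: leq_trans km mp.
    apply: hz; first exact: ltnW.
    move=> j' j'J; rewrite /upd; case: ifP => [_|/negbT jn]; first by rewrite neq_ltn kp orbT.
    by apply: hk; rewrite ltn_neqAle jn -ltnS.
  case: (ltP (`|d p|) 1) => [dp1|dp1].
    have hlt := hV d M (leq_trans mp (ltnW pM)) hnP (bal_sub hb).1.
    rewrite /upd; case: ifP => [_|/negbT jJ] //.
    by apply: hlt; rewrite ltn_neqAle jJ -ltnS.
  exfalso.
  have dp0 : d p != 0 by apply/negP => /eqP e; move: dp1; rewrite e normr0 leNgt ltr01.
  pose c := (d p)^-1.
  have c1 : `|- c| <= 1.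
    by rewrite normrN normfV invf_le1 // (lt_le_trans ltr01 dp1).
  have [_ Wv] := bal_sub (bal_bal c1 hb).
  apply: (BS _ Wv).
  rewrite (sum_split1 d a p M) pM scalerDr scalerA mulNr mulVf // scaleN1r addrNK.
  apply: Sp_scale; exists (fun k => if k == p then 0 else d k), M; split => //.
  move=> k kp hk; case: eqP => // /eqP kneq; apply: hz; first exact: leq_trans kp _.
  move=> j' j'J; rewrite /upd; case: ifP => [_|/negbT jn]; first by rewrite eq_sym.
  by apply: hk; rewrite ltn_neqAle jn -ltnS.
Qed.
End Construct.
Section Construct2.
Context {R : realType} {E : topologicalLmodType R}.
Variable a : nat -> E.
Hypothesis ha : RN_convergent a.
Hypothesis hE : hausdorff_space E.
Hypothesis hnt : nontrivial_seq a.

Lemma construct : exists q : nat -> nat, (forall j, (q j < q j.+1)%N) /\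
  forall J, exists m (V : set E), nbhs 0 V /\
    forall (d : nat -> R) M, (m <= M)%N ->
      (forall k, (k < m)%N -> (forall j, q j != k) -> d k = 0) ->
      V (\sum_(k < M) d k *: a k) -> forall j, (j < J)%N -> `|d (q j)| < 1.
Proof.
pose state := ((nat -> nat) * nat * set E)%type.
have hG : forall x : nat * state, exists y : state,
    Inv a x.1 x.2.1.1 x.2.1.2 x.2.2 -> exists p, [/\ (x.2.1.2 <= p)%N,
      y.1.1 = upd x.2.1.1 x.1 p, y.1.2 = p.+1 & Inv a x.1.+1 y.1.1 y.1.2 y.2].
  move=> [J [[f m] V]] /=; case: (pselect (Inv a J f m V)) => hI.
    have [p [V' [mp hI']]] := Inv_step ha hE hnt hI.
    by exists (upd f J p, p.+1, V') => _; exists p.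
  by exists (f, m, V).
have [G hG'] := choice hG.
pose stt := nat_rect (fun _ => state) ((fun _ => 0%N), 0%N, setT) (fun J s => G (J, s)).
have sttS : forall J, stt J.+1 = G (J, stt J) by [].
have hI : forall J, Inv a J (stt J).1.1 (stt J).1.2 (stt J).2.
  elim => [|J IH].
    split => //=; exact: filterT.
  have [p [_ _ _ h]] := hG' (J, stt J) IH.
  by rewrite sttS.
pose q J := (stt J.+1).1.1 J.
have hstep : forall J, [/\ ((stt J).1.2 <= q J)%N,
    (stt J.+1).1.1 = upd (stt J).1.1 J (q J) & (stt J.+1).1.2 = (q J).+1].
  move=> J; have [p [mp e1 e2 _]] := hG' (J, stt J) (hI J).
  have qp : q J = p by rewrite /q sttS e1 /upd eqxx.
  by rewrite qp sttS; split.
have stab : forall J j, (j < J)%N -> (stt J).1.1 j = q j.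
  elim => [//|J IH] j; rewrite ltnS leq_eqVlt => /orP [/eqP ->|jJ].
    by have [_ -> _] := hstep J; rewrite /upd eqxx.
  by have [_ -> _] := hstep J; rewrite /upd (ltn_eqF jJ) IH.
have mmono : forall J i, ((stt J).1.2 <= (stt (J + i)).1.2)%N.
  move=> J; elim => [|i IH]; first by rewrite addn0.
  apply: leq_trans IH _; rewrite addnS; have [h _ ->] := hstep (J + i).
  exact: leq_trans h (leqnSn _).
have qge : forall J j, (J <= j)%N -> ((stt J).1.2 <= q j)%N.
  move=> J j Jj; have [h _ _] := hstep j; apply: leq_trans h.
  by have := mmono J (j - J)%N; rewrite subnKC.
exists q; split.
  move=> j; have [_ _ e] := hstep j; rewrite -ltnS -e; apply: qge => //.
move=> J; exists (stt J).1.2, (stt J).2.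
have [V0 hf hV] := hI J; split => // d M mM hz hVs j jJ.
rewrite -(stab J) //; apply: (hV d M mM) => //.
move=> k km hk; apply: hz => // j'; case: (ltnP j' J) => jj.
  by rewrite -(stab J) //; apply: hk.
by rewrite neq_ltn (leq_trans km (qge _ _ jj)) orbT.
Qed.
End Construct2.
Section RNnbhs.
Context {R : realType}.

Lemma RN_basic_nbhs (x : RN R) J (eps : R) : 0 < eps ->
  nbhs x [set y : RN R | forall j, (j < J)%N -> `|y j - x j| < eps].
Proof.
move=> e0; elim: J => [|J IH].
  by apply: filterS filterT => y _ j.
have h : nbhs x [set y : RN R | `|y J - x J| < eps].
  have hb : nbhs (x J) (ball (x J) eps) by exact: nbhsx_ballx.
  have := @proj_continuous nat (fun _ => R) J x _ hb.
  move=> h; apply: (@filterS _ (nbhs x) _ (proj J @^-1` ball (x J) eps)); last exact: h.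
  by move=> y; rewrite /ball /= distrC.
apply: filterS (filterI IH h) => y [h1 h2] j; rewrite ltnS leq_eqVlt => /orP [/eqP ->|jJ] //.
exact: h1.
Qed.


Lemma RN_nbhs_basic (x : RN R) (U : set (RN R)) : nbhs x U ->
  exists J (eps : R), 0 < eps /\
    forall y : RN R, (forall j, (j < J)%N -> `|y j - x j| < eps) -> U y.
Proof.
pose B := fun p : nat * R => [set y : RN R | forall j, (j < p.1)%N -> `|y j - x j| < p.2].
pose F := filter_from [set p : nat * R | 0 < p.2] B.
have FF : Filter F.
  apply: filter_from_filter; first by exists (0%N, 1); rewrite /= ltr01.
  move=> [J1 e1] [J2 e2] /= e10 e20; exists (maxn J1 J2, Num.min e1 e2).
    by rewrite /= lt_min e10.
  move=> y /= hy; rewrite /B /=; split => j jJ.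
    by apply: lt_le_trans (hy j (leq_trans jJ (leq_maxl _ _))) _; rewrite ge_min lexx.
  by apply: lt_le_trans (hy j (leq_trans jJ (leq_maxr _ _))) _; rewrite ge_min lexx orbT.
have cF : F --> (x : RN R).
  apply/(@pointwise_cvgP _ _ F x FF) => t A /nbhs_ballP [e e0 he].
  exists (t.+1, e) => //= y hy; apply: he; rewrite /ball /= distrC.
  exact: hy.
move=> /cF [[J e] /= e0 hB]; exists J, e; split => // y hy; exact: hB.
Qed.
End RNnbhs.
Section TMap.
Context {R : realType} {E : topologicalLmodType R}.
Variable a : nat -> E.
Hypothesis ha : RN_convergent a.
Hypothesis hE : hausdorff_space E.
Variable q : nat -> nat.
Hypothesis hq : forall j, (q j < q j.+1)%N.
Hypothesis hq2 : forall J, exists m (V : set E), nbhs 0 V /\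
    forall (d : nat -> R) M, (m <= M)%N ->
      (forall k, (k < m)%N -> (forall j, q j != k) -> d k = 0) ->
      V (\sum_(k < M) d k *: a k) -> forall j, (j < J)%N -> `|d (q j)| < 1.

Lemma q_lt j j' : (j < j')%N -> (q j < q j')%N.
Proof.
elim: j' => [//|j' IH]; rewrite ltnS leq_eqVlt => /orP [/eqP ->|jj]; first exact: hq.
exact: ltn_trans (IH jj) (hq j').
Qed.

Lemma q_ge j : (j <= q j)%N.
Proof. by elim: j => // j IH; apply: leq_ltn_trans IH (hq j). Qed.

Lemma q_inj : injective q.
Proof.
move=> i j e; apply/eqP; case: (ltngtP i j) => // h.
  by have := q_lt h; rewrite e ltnn.
by have := q_lt h; rewrite e ltnn.
Qed.

Definition sp (r : nat -> R) k := \sum_(j < k.+1 | q j == k) r j.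

Lemma sp_q r j : sp r (q j) = r j.
Proof.
have hj : (j < (q j).+1)%N by rewrite ltnS q_ge.
rewrite /sp (big_pred1 (Ordinal hj)) // => i /=.
by rewrite (inj_eq q_inj) -val_eqE.
Qed.

Lemma sp_nq r k : (forall j, q j != k) -> sp r k = 0.
Proof. by move=> h; rewrite /sp big_pred0 // => i; exact: negbTE. Qed.

Lemma sp_lin c x y k : sp (fun n => c * x n + y n) k = c * sp x k + sp y k.
Proof. by rewrite /sp big_split /= mulr_sumr. Qed.

Lemma sp_case r k : (exists2 j, q j = k & sp r k = r j) \/ sp r k = 0.
Proof.
case: (pselect (exists j, q j = k)) => [[j e]|h].
  by left; exists j => //; rewrite -e sp_q.
by right; apply: sp_nq => j; apply/eqP => e; apply: h; exists j.
Qed.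

Definition PS r n := \sum_(k < n) sp r k *: a k.
Definition T (r : nat -> R) : E := proj1_sig (cid (ha (sp r))).

Lemma T_cvg r : PS r @ \oo --> T r.
Proof. exact: (proj2_sig (cid (ha (sp r)))). Qed.

Lemma uniq_lim (u : nat -> E) (l1 l2 : E) : u @ \oo --> l1 -> u @ \oo --> l2 -> l1 = l2.
Proof. by move=> h1 h2; exact: (@cvg_unique E hE (u @ \oo) _ l1 l2 h1 h2). Qed.

Lemma cvgD_tvs (u v : nat -> E) (l l' : E) :
  u @ \oo --> l -> v @ \oo --> l' -> (fun n => u n + v n) @ \oo --> l + l'.
Proof.
move=> hu hv.
apply: (@cvg_trans _ ((fun z : E * E => z.1 + z.2) @ ((fun n => (u n, v n)) @ \oo))).
  by [].
apply: cvg_trans (@add_continuous E (l, l')).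
by apply: cvg_app; apply: cvg_pair.
Qed.

Lemma cvgZ_tvs (c : R) (u : nat -> E) (l : E) :
  u @ \oo --> l -> (fun n => c *: u n) @ \oo --> c *: l.
Proof.
move=> hu.
apply: (@cvg_trans _ ((fun z : E => c *: z) @ (u @ \oo))); first by [].
apply: cvg_trans (@scaler_cont R E c l).
exact: cvg_app.
Qed.

Lemma T_lin c x y : T (fun n => c * x n + y n) = c *: T x + T y.
Proof.
have e : PS (fun n => c * x n + y n) = fun n => c *: PS x n + PS y n.
  apply: funext => n; rewrite /PS scaler_sumr -big_split /=.
  by apply: eq_bigr => k _; rewrite sp_lin scalerDl scalerA.
have h := @T_cvg (fun n => c * x n + y n); rewrite e in h; apply: (uniq_lim h).
apply: cvgD_tvs; last exact: T_cvg.
by apply: cvgZ_tvs; exact: T_cvg.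
Qed.

Lemma T0 : T (fun _ => 0) = 0.
Proof.
have e : PS (fun _ => 0) = fun _ => 0.
  apply: funext => n; rewrite /PS big1 // => k _.
  by rewrite /sp big1 ?scale0r.
have h := @T_cvg (fun _ => 0); rewrite e in h; apply: (uniq_lim h).
exact: cvg_cst.
Qed.

Lemma T_scale c x : T (fun n => c * x n) = c *: T x.
Proof.
have -> : (fun n => c * x n) = (fun n => c * x n + (fun _ => 0) n).
  by apply: funext => n /=; rewrite addr0.
by rewrite T_lin T0 addr0.
Qed.

Lemma T_coord J (eps : R) : 0 < eps -> exists Ob : set E,
  [/\ open Ob, Ob 0 & forall r, Ob (T r) -> forall j, (j < J)%N -> `|r j| < eps].
Proof.
move=> e0; have [m [V [V0 hV]]] := hq2 J.
exists [set z | V° (eps^-1 *: z)]; split.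
- by apply: open_comp; [move=> z _; exact: scaler_cont | exact: open_interior].
- by rewrite /= scaler0; exact: nbhs_singleton (nbhs_interior V0).
move=> r Or j jJ.
pose r' := fun n => eps^-1 * r n.
have Tr' : T r' = eps^-1 *: T r by exact: T_scale.
have : nbhs (T r') V° by apply: open_nbhs_nbhs; split; [exact: open_interior|rewrite Tr'].
move=> /(cvg_ev (@T_cvg r')) [N hN].
have hV' := hV (sp r') (maxn N m) (leq_maxr _ _) (fun k _ h => sp_nq r' h)
  (interior_subset (hN _ (leq_maxl _ _))) j jJ.
by move: hV'; rewrite sp_q /r' normrM gtr0_norm ?invr_gt0 // mulrC ltr_pdivrMr // mul1r.
Qed.

Lemma T_inj : injective T.
Proof.
move=> x y e; apply: funext => j; apply: contrapT => nj.
have e0 : 0 < `|x j - y j| by rewrite normr_gt0 subr_eq0; apply/eqP.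
have [Ob [_ O0 hO]] := T_coord j.+1 e0.
pose r := fun n => (-1) * y n + x n.
have Tr : T r = 0 by rewrite /r T_lin e scaleN1r addNr.
have : Ob (T r) by rewrite Tr.
move=> /hO /(_ j (ltnSn j)).
by rewrite /r mulN1r addrC ltxx.
Qed.

Lemma T_cont : continuous (T : RN R -> E).
Proof.
move=> x W /= Wn.
pose U := [set z | W (z + T x)].
have U0 : nbhs 0 U by have := @addr_cont R E (T x) 0 W; rewrite add0r => /(_ Wn).
have [U1 U10 hU1] := nbhs0_add3 U0.
have [N hN] := tail_small ha U10.
have [del del0 hdel] := head_small a N U10.
apply: filterS (RN_basic_nbhs x N del0) => y hy.
have Ty : T y = T (fun n => y n - x n) + T x.
  rewrite -[in LHS](_ : (fun n => 1 * (y n - x n) + x n) = y) ?T_lin ?scale1r //.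
  by apply: funext => n; rewrite mul1r subrK.
rewrite /= Ty; suff : U (T (fun n => y n - x n)) by [].
set r := fun n => y n - x n.
have hc : (fun n => T r - PS r n) @ \oo --> T r - T r.
  by apply: cvgB_tvs; [exact: cvg_cst|exact: T_cvg].
rewrite subrr in hc.
have [M0 hM0] := cvg_ev hc U10.
set M := maxn M0 N.
have -> : T r = PS r M + (T r - PS r M) by rewrite addrC subrK.
rewrite {1}/PS (sum_split_at (sp r) a N M); apply: hU1.
- apply: (hdel (fun k => if (k < N)%N then sp r k else 0)).
    move=> k kN; rewrite kN; case: (sp_case r k) => [[j qj ->]|->]; last by rewrite normr0.
    by apply: hy; apply: leq_ltn_trans (q_ge j) _; rewrite qj.
  by move=> k Nk; rewrite ltnNge Nk.
- by apply: (hN (fun k => if (k < N)%N then 0 else sp r k)) => k kN; rewrite kN.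
- by apply: hM0; exact: leq_maxl.
Qed.

Lemma T_open (U : set (RN R)) : open U ->
  exists V : set E, open V /\ T @` U = V `&` range T.
Proof.
move=> oU.
pose good (x : RN R) (Ob : set E) := [/\ U x, open Ob, Ob 0 & exists J (eps : R),
  (forall r, Ob (T r) -> forall j, (j < J)%N -> `|r j| < eps) /\
  (forall y : RN R, (forall j, (j < J)%N -> `|y j - x j| < eps) -> U y)].
exists [set z | exists x Ob, good x Ob /\ Ob (z - T x)]; split.
  rewrite openE => z [x [Ob [gx Oz]]].
  case: (gx) => _ oO _ _.
  have : nbhs (z - T x) Ob by apply: open_nbhs_nbhs; split.
  move=> /(@addr_cont R E (- T x) z) h.
  apply: (@filterS _ (nbhs z) _ _ _ _ h) => z' Oz'.
  by exists x, Ob.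
apply/seteqP; split.
  move=> _ [x Ux <-]; split; last by exists x.
  have [J [eps [e0 hb]]] := RN_nbhs_basic (open_nbhs_nbhs (conj oU Ux)).
  have [Ob [oO O0 hO]] := T_coord J e0.
  exists x, Ob; split; last by rewrite subrr.
  by split => //; exists J, eps.
move=> z [[x [Ob [[Ux oO O0 [J [eps [hO hb]]]] Oz]]] [y _ yz]].
exists y => //; apply: hb => j jJ.
have eT : T (fun n => (-1) * x n + y n) = z - T x by rewrite T_lin scaleN1r addrC yz.
have : Ob (T (fun n => (-1) * x n + y n)) by rewrite eT.
move=> /hO /(_ j jJ).
by rewrite mulN1r addrC.
Qed.
End TMap.
Section Final.
Context {R : realType} {E : topologicalLmodType R}.

Lemma bwd (hE : hausdorff_space E) :
  (exists a : nat -> E, nontrivial_seq a /\ RN_convergent a) ->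
  exists f : RN R -> E, top_lin_embedding f.
Proof.
move=> [a [hnt ha]]; have [q [hq hq2]] := construct ha hE hnt.
exists (T ha q); split.
- by move=> c x y; exact: T_lin.
- exact: (T_inj hE hq hq2).
- exact: (T_cont hE hq).
- by move=> U oU; exact: (T_open ha hE hq hq2 oU).
Qed.

Lemma fwd : (exists f : RN R -> E, top_lin_embedding f) ->
  exists a : nat -> E, nontrivial_seq a /\ RN_convergent a.
Proof.
move=> [f [hlin hinj hcont _]].
pose e (n : nat) : RN R := fun k => if k == n then 1 else 0.
pose z : RN R := fun _ => 0.
have f0 : f z = 0.
  have := hlin 1 z z.
  rewrite (_ : (fun n => 1 * z n + z n) = z); last by apply: funext => n; rewrite /z mulr0 addr0.
  rewrite scale1r => h.
  by have := congr1 (fun v => v - f z) h; rewrite /= subrr addrK.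
have flin : forall (r : nat -> R) n,
    f (fun k => \sum_(i < n) r i * e i k) = \sum_(i < n) r i *: f (e i).
  move=> r; elim => [|n IH].
    rewrite big_ord0 -f0; congr f; apply: funext => k; by rewrite big_ord0.
  rewrite big_ord_recr /= addrC -IH -hlin; congr f; apply: funext => k.
  by rewrite big_ord_recr /= addrC.
exists (fun n => f (e n)); split.
  have an0 : forall n, f (e n) != 0.
    move=> n; apply/negP => /eqP h.
    have : e n = z by apply: hinj; rewrite h f0.
    move=> /(congr1 (fun g => g n)); rewrite /e /z eqxx => /eqP.
    by rewrite oner_eq0.
  apply: (@sub_infinite_set _ setT); last exact: infinite_nat.
  by move=> n _; exact: an0.
move=> r; exists (f r).
pose s n : RN R := fun k => \sum_(i < n) r i * e i k.
have st : forall n t, (t < n)%N -> s n t = r t.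
  move=> n t tn; rewrite /s (bigD1 (Ordinal tn)) //= /e eqxx mulr1 big1 ?addr0 //.
  move=> i; rewrite -val_eqE /= eq_sym => /negbTE ->; by rewrite mulr0.
have sc : s n @[n --> \oo] --> (r : RN R).
  apply/pointwise_cvgP => t A /nbhs_singleton At.
  by exists t.+1 => // n /= tn; rewrite st.
have -> : (fun n => \sum_(k < n) r k *: f (e k)) = (fun n => f (s n)).
  by apply: funext => n; rewrite /s flin.
apply: (@cvg_trans _ (f @ (s @ \oo))); first by [].
apply: cvg_trans (hcont r).
exact: cvg_app.
Qed.
End Final.

Theorem theorem11p4 (R : realType) (E : topologicalLmodType R)
    (hE : hausdorff_space E) :
  (exists f : RN R -> E, top_lin_embedding f) <->
  (exists a : nat -> E, nontrivial_seq a /\ RN_convergent a).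
Proof. by split; [exact: fwd | exact: bwd]. Qed.
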